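(* Let $m$ be an integer and $\alpha\in(\frac12,\frac23)$. For an integer $N\ge 2$ let $v=e^{\pi i/N}$, $q^{1/8}=e^{\pi i/(4N)}$ (so $q^{mj^2/8}=\exp(\pi i m j^2/(4N))$), $\{n\}=v^n-v^{-n}$, $A(j,k)=\{j-k\}\{j+k\}$, $S(k,l)=\prod_{k\le n\le l}\{n\}$, and for $0\le l<j<N/2$ $$D_1(j,l)=\Big(\frac{mj}{2}+\frac{v^j+v^{-j}}{\{j\}}+2\{2j\}\sum_{k=1}^l\frac{1}{A(j,k)}\Big)S(j-l,j+l).$$ Let $F_N=\big(\prod_{r=1}^{\lfloor 5N/6\rfloor}2\sin\frac{r\pi}{N}\big)\big/\big(\prod_{r=1}^{\lfloor N/6\rfloor-1}2\sin\frac{r\pi}{N}\big)$. Then, as $N\to\infty$, $$\sum_{\substack{1\le j\le N/2-1\\ N-j+1\ \text{even}}}\ \sum_{l=0}^{j-1} q^{mj^2/8}D_1(j,l) = O\big(N^{3\alpha}F_N\big).$$ *)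

(* Defs.v *)
From Stdlib Require Import Reals ZArith List Lra.
From Coquelicot Require Import Coquelicot.
Open Scope R_scope.

Definition cexpi (t : R) : C := (cos t, sin t).

Definition vpow (N : nat) (n : Z) : C := cexpi (PI * IZR n / INR N).

Definition brace (N : nat) (n : Z) : C := Cminus (vpow N n) (vpow N (- n)).

Definition Afun (N : nat) (j k : Z) : C :=
  Cmult (brace N (j - k)) (brace N (j + k)).

(* integer range a, a+1, ..., b (empty if b < a) *)
Definition Zrange (a b : Z) : list Z :=
  map (fun i => (a + Z.of_nat i)%Z) (seq 0 (Z.to_nat (b - a + 1))).

Definition Csum_range (a b : Z) (f : Z -> C) : C :=
  fold_right Cplus (RtoC 0) (map f (Zrange a b)).

Definition Cprod_range (a b : Z) (f : Z -> C) : C :=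
  fold_right Cmult (RtoC 1) (map f (Zrange a b)).

Definition Sfun (N : nat) (k l : Z) : C := Cprod_range k l (brace N).

Definition D1 (N : nat) (m j l : Z) : C :=
  Cmult
    (Cplus
       (Cplus (RtoC (IZR m * IZR j / 2))
              (Cdiv (Cplus (vpow N j) (vpow N (- j))) (brace N j)))
       (Cmult (Cmult (RtoC 2) (brace N (2 * j)))
              (Csum_range 1 l (fun k => Cinv (Afun N j k)))))
    (Sfun N (j - l) (j + l)).

Definition qpow (N : nat) (m j : Z) : C :=
  cexpi (PI * IZR m * IZR (j * j) / (4 * INR N)).

(* The double sum: 1 <= j <= N/2 - 1 (i.e. j <= floor(N/2) - 1), N-j+1 even,
   0 <= l <= j-1. *)
Definition LHS (N : nat) (m : Z) : C :=
  Csum_range 1 (Z.of_nat N / 2 - 1)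
    (fun j => if Z.even (Z.of_nat N - j + 1)
              then Csum_range 0 (j - 1) (fun l => Cmult (qpow N m j) (D1 N m j l))
              else RtoC 0).

Definition sinprod (N b : nat) : R :=
  fold_right Rmult 1 (map (fun r => 2 * sin (INR r * PI / INR N)) (seq 1 b)).

(* F_N ; note floor(N/6)-1 truncated at 0 gives the empty product when N < 6 *)
Definition FN (N : nat) : R := sinprod N ((5 * N) / 6) / sinprod N (N / 6 - 1).

(* Main.v *)
Require Import Defs.
From Stdlib Require Import Reals ZArith List Lra Lia Classical Bool.
From Coquelicot Require Import Coquelicot.
Open Scope R_scope.

Fixpoint rsum (F : nat -> R) (n : nat) : R :=
  match n with O => 0 | S k => rsum F k + F k end.

Lemma fold_Rplus_acc (l : list R) (x : R) :
  fold_right Rplus x l = fold_right Rplus 0 l + x.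
Proof. induction l; simpl; [lra|rewrite IHl; lra]. Qed.

Lemma fold_Rmult_acc (l : list R) (x : R) :
  fold_right Rmult x l = fold_right Rmult 1 l * x.
Proof. induction l; simpl; [lra|rewrite IHl; ring]. Qed.

Lemma fold_seq_rsum (F : nat -> R) (n : nat) :
  fold_right Rplus 0 (map F (seq 0 n)) = rsum F n.
Proof.
  induction n; [reflexivity|].
  rewrite seq_S, map_app, fold_right_app; simpl.
  rewrite fold_Rplus_acc, IHn; lra.
Qed.

Lemma Csum_pairs {A} (X Y : A -> R) (s : list A) :
  fold_right Cplus (RtoC 0) (map (fun i => (X i, Y i)) s) =
  (fold_right Rplus 0 (map X s), fold_right Rplus 0 (map Y s)).
Proof.
  induction s; simpl; [reflexivity|]. rewrite IHs. reflexivity.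
Qed.

Lemma Csum_scal {A} (q : C) (F : A -> C) (s : list A) :
  fold_right Cplus (RtoC 0) (map (fun i => Cmult q (F i)) s) =
  Cmult q (fold_right Cplus (RtoC 0) (map F s)).
Proof.
  induction s; simpl.
  - destruct q; unfold Cmult, RtoC; simpl; f_equal; ring.
  - rewrite IHs. destruct q, (F a), (fold_right Cplus (RtoC 0) (map F s)).
    unfold Cmult, Cplus; simpl; f_equal; ring.
Qed.

Lemma Cmod_sum_le {A} (F : A -> C) (s : list A) :
  Cmod (fold_right Cplus (RtoC 0) (map F s)) <=
  fold_right Rplus 0 (map (fun i => Cmod (F i)) s).
Proof.
  induction s; simpl.
  - rewrite Cmod_0. lra.
  - eapply Rle_trans; [apply Cmod_triangle|]. lra.
Qed.

Lemma fold_Rplus_le {A} (F G : A -> R) (s : list A) :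
  (forall x, In x s -> F x <= G x) ->
  fold_right Rplus 0 (map F s) <= fold_right Rplus 0 (map G s).
Proof.
  induction s; simpl; intros H; [lra|].
  assert (F a <= G a) by (apply H; auto).
  assert (fold_right Rplus 0 (map F s) <= fold_right Rplus 0 (map G s)) by (apply IHs; auto).
  lra.
Qed.

Lemma fold_Rmult_le {A} (F G : A -> R) (s : list A) :
  (forall x, In x s -> 0 <= F x <= G x) ->
  fold_right Rmult 1 (map F s) <= fold_right Rmult 1 (map G s).
Proof.
  assert (Hpos : forall s, (forall x, In x s -> 0 <= F x) -> 0 <= fold_right Rmult 1 (map F s)).
  { induction s0; simpl; intros; [lra|]. apply Rmult_le_pos; [apply H; auto|apply IHs0; auto]. }
  induction s; simpl; intros H; [lra|].
  apply Rmult_le_compat.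
  - apply H; auto.
  - apply Hpos; intros; apply H; auto.
  - apply H; auto.
  - apply IHs; auto.
Qed.

Lemma fold_Rmult_ge1 {A} (F : A -> R) (s : list A) :
  (forall x, In x s -> 1 <= F x) -> 1 <= fold_right Rmult 1 (map F s).
Proof.
  induction s; simpl; intros H; [lra|].
  assert (1 <= F a) by (apply H; auto).
  assert (1 <= fold_right Rmult 1 (map F s)) by (apply IHs; auto).
  nra.
Qed.

Lemma fold_Rmult_pos {A} (F : A -> R) (s : list A) :
  (forall x, In x s -> 0 < F x) -> 0 < fold_right Rmult 1 (map F s).
Proof.
  induction s; simpl; intros H; [lra|].
  apply Rmult_lt_0_compat; [apply H|apply IHs]; auto.
Qed.

Lemma fold_Rmult_app {A} (F : A -> R) (s1 s2 : list A) :
  fold_right Rmult 1 (map F (s1 ++ s2)) =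
  fold_right Rmult 1 (map F s1) * fold_right Rmult 1 (map F s2).
Proof.
  rewrite map_app, fold_right_app, fold_Rmult_acc. reflexivity.
Qed.

Lemma fold_Rmult_one {A} (F : A -> R) (s : list A) :
  (forall x, In x s -> F x = 1) -> fold_right Rmult 1 (map F s) = 1.
Proof.
  induction s; simpl; intros H; [lra|]. rewrite H, IHs; auto; lra.
Qed.

Lemma rsum_le (F G : nat -> R) n : (forall i, (i < n)%nat -> F i <= G i) -> rsum F n <= rsum G n.
Proof.
  induction n; simpl; intros H; [lra|].
  assert (F n <= G n) by (apply H; lia).
  assert (rsum F n <= rsum G n) by (apply IHn; intros; apply H; lia). lra.
Qed.

Lemma rsum_lin (F G : nat -> R) a b n : rsum (fun i => a * F i + b * G i) n = a * rsum F n + b * rsum G n.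
Proof. induction n; simpl; [ring| rewrite IHn; ring]. Qed.

Lemma rsum_tele (phi : nat -> R) n : rsum (fun i => phi (S i) - phi i) n = phi n - phi O.
Proof. induction n; simpl; [ring| rewrite IHn; ring]. Qed.

Lemma rsum_const c n : rsum (fun _ => c) n = INR n * c.
Proof. induction n; simpl rsum; [simpl; ring| rewrite IHn, S_INR; ring]. Qed.

Definition alt (b : nat -> R) (n : nat) := rsum (fun l => (-1)^l * b l) n.

Lemma m1sq n : (-1)^n * (-1)^n = 1.
Proof. rewrite <- pow_add. replace (n+n)%nat with (2*n)%nat by lia. rewrite pow_1_even. reflexivity. Qed.

Lemma alt_inc n b : (forall l, (l < n)%nat -> b l <= b (S l)) -> (forall l, (l <= n)%nat -> 0 <= b l) ->
  0 <= (-1)^n * alt b (S n) <= b n.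
Proof.
  induction n; intros H1 H2.
  - unfold alt; simpl. specialize (H2 O (le_n _)). lra.
  - assert (IH := IHn (fun l Hl => H1 l ltac:(lia)) (fun l Hl => H2 l ltac:(lia))).
    assert (b n <= b (S n)) by (apply H1; lia).
    assert (0 <= b (S n)) by (apply H2; lia).
    unfold alt in *. change (rsum (fun l => (-1)^l * b l) (S (S n))) with
      (rsum (fun l => (-1)^l * b l) (S n) + (-1)^(S n) * b (S n)).
    simpl pow. pose proof (m1sq n). set (p := (-1)^n) in *. 
    set (X := rsum (fun l : nat => (-1) ^ l * b l) (S n)) in *. nra.
Qed.

Lemma alt_front b k : alt b (S k) = b O - alt (fun i => b (S i)) k.
Proof.
  unfold alt; induction k.
  - simpl. ring.
  - change (rsum (fun l => (-1)^l * b l) (S (S k))) with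
      (rsum (fun l => (-1)^l * b l) (S k) + (-1)^(S k) * b (S k)).
    rewrite IHk. simpl. ring.
Qed.

Lemma alt_dec k : forall b, (forall i, (i < k)%nat -> b (S i) <= b i) -> (forall i, (i <= k)%nat -> 0 <= b i) ->
  0 <= alt b (S k) <= b O.
Proof.
  induction k; intros b H1 H2.
  - unfold alt; simpl. specialize (H2 O (le_n _)). lra.
  - rewrite alt_front.
    assert (IH := IHk (fun i => b (S i)) (fun i Hi => H1 (S i) ltac:(lia)) (fun i Hi => H2 (S i) ltac:(lia))).
    simpl in IH. assert (b 1%nat <= b O) by (apply H1; lia). lra.
Qed.

Lemma alt_split b p k : alt b (p + k) = alt b p + (-1)^p * alt (fun i => b (p + i)%nat) k.
Proof.
  unfold alt; induction k.
  - rewrite Nat.add_0_r. simpl. ring.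
  - rewrite Nat.add_succ_r. simpl rsum. rewrite IHk, pow_add. ring.
Qed.

Lemma min_witness (P : nat -> Prop) n :
  (forall p, (p < n)%nat -> ~ P p) \/ exists p, (p < n)%nat /\ P p /\ forall q, (q < p)%nat -> ~ P q.
Proof.
  induction n.
  - left; intros; lia.
  - destruct IHn as [H|[p [Hp [HP Hq]]]].
    + destruct (classic (P n)) as [HPn|HPn].
      * right; exists n; repeat split; auto.
      * left; intros q Hq. destruct (Nat.eq_dec q n); [subst; auto| apply H; lia].
    + right; exists p; repeat split; auto.
Qed.

Lemma alt_bound n b B : 0 <= B -> (forall l, (l < n)%nat -> 0 <= b l <= B) ->
  (forall l, (S (S l) < n)%nat -> b (S l) < b l -> b (S (S l)) < b (S l)) ->
  Rabs (alt b n) <= 2 * B.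
Proof.
  intros HB Hb Hprop.
  destruct n as [|n'].
  - unfold alt; simpl. rewrite Rabs_R0. lra.
  - destruct (min_witness (fun p => b (S p) < b p) n') as [H|[p [Hp [HP Hq]]]].
    + assert (A := alt_inc n' b (fun l Hl => Rnot_lt_le _ _ (H l Hl)) (fun l Hl => proj1 (Hb l ltac:(lia)))).
      assert (b n' <= B) by (apply Hb; lia).
      assert (HE : Rabs (alt b (S n')) = Rabs ((-1)^n' * alt b (S n'))).
      { rewrite Rabs_mult, pow_1_abs. ring. }
      rewrite HE. rewrite Rabs_pos_eq; lra.
    + assert (A1 := alt_inc p b (fun l Hl => Rnot_lt_le _ _ (Hq l Hl)) (fun l Hl => proj1 (Hb l ltac:(lia)))).
      assert (Hdec : forall i, (S p + i + 1 < S n')%nat -> b (S p + S i)%nat < b (S p + i)%nat).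
      { induction i; intros Hi.
        - replace (S p + 1)%nat with (S (S p)) by lia. replace (S p + 0)%nat with (S p) by lia.
          apply Hprop; [lia|]. exact HP.
        - replace (S p + S (S i))%nat with (S (S (p + S i))) by lia.
          replace (S p + S i)%nat with (S (p + S i)) by lia.
          apply Hprop; [lia|]. 
          replace (S (p + S i)) with (S p + S i)%nat by lia.
          replace (p + S i)%nat with (S p + i)%nat by lia. apply IHi. lia. }
      destruct (Nat.lt_exists_pred 0 (n' - p)) as [k [Hk _]]; [lia|].
      assert (A2 : 0 <= alt (fun i => b (S p + i)%nat) (S k) <= b (S p + O)%nat).
      { apply alt_dec.
        - intros i Hi. apply Rlt_le, Hdec. lia.
        - intros i Hi. apply Hb. lia. }
      replace (S n') with (S p + S k)%nat by lia.
      rewrite alt_split.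
      assert (b p <= B) by (apply Hb; lia).
      assert (b (S p + O)%nat <= B) by (apply Hb; lia).
      assert (Rabs ((-1)^p * alt b (S p)) <= B) by (rewrite Rabs_pos_eq; lra).
      rewrite Rabs_mult, pow_1_abs in H1.
      eapply Rle_trans; [apply Rabs_triang|].
      rewrite Rabs_mult, pow_1_abs, (Rabs_pos_eq (alt _ (S k))) by lra. lra.
Qed.

Lemma PI_gt3 : 3 < PI. Proof. pose proof PI2_3_2. lra. Qed.
Lemma PI_le4 : PI <= 4. Proof. exact PI_4. Qed.

Lemma sin_lb3 x : 0 <= x <= 2 -> x - x^3/6 <= sin x.
Proof.
  intros Hx. pose proof PI_gt3. destruct (SIN x) as [H0 _]; [lra|lra|].
  eapply Rle_trans; [|exact H0].
  unfold sin_lb, sin_approx, sin_term. simpl sum_f_R0.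
  simpl Factorial.fact. simpl INR.
  assert (0 <= x^5) by (apply pow_le; lra).
  assert (x^7 = x^5 * x^2) by ring.
  assert (x^2 <= 4) by nra.
  nra.
Qed.

Lemma sin_ge_third x : 0 <= x <= PI/2 -> x/3 <= sin x.
Proof.
  intros Hx. pose proof PI_le4. assert (H1 := sin_lb3 x ltac:(lra)). nra.
Qed.

Lemma sin_sym_ge x t : 0 <= x <= PI/2 -> x <= t <= PI - x -> sin x <= sin t.
Proof.
  intros Hx Ht. destruct (Rle_dec t (PI/2)).
  - destruct (Req_dec x t); [subst; lra|]. left; apply sin_increasing_1; lra.
  - rewrite <- (sin_PI_x t). destruct (Req_dec x (PI - t)); [rewrite H; lra|].
    left; apply sin_increasing_1; lra.
Qed.

Lemma sin_ge_half t : PI/6 <= t <= PI - PI/6 -> 1/2 <= sin t.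
Proof.
  intros Ht. rewrite <- sin_PI6. apply sin_sym_ge; pose proof PI_RGT_0; lra.
Qed.

Lemma sin_le_half t : 0 <= t <= PI/6 \/ PI - PI/6 <= t <= PI -> sin t <= 1/2.
Proof.
  pose proof PI_RGT_0. rewrite <- sin_PI6. intros [Ht|Ht].
  - destruct (Req_dec t (PI/6)); [subst; lra|]. left; apply sin_increasing_1; lra.
  - rewrite <- (sin_PI_x t). destruct (Req_dec (PI - t) (PI/6)); [rewrite H0; lra|].
    left; apply sin_increasing_1; lra.
Qed.

Lemma sin_nonneg t : 0 <= t <= PI -> 0 <= sin t.
Proof. intros; apply sin_ge_0; lra. Qed.

Lemma two_sin_prod a b : 2 * sin a * (2 * sin b) = 2 * cos (b - a) - 2 * cos (a + b).
Proof. rewrite cos_minus, cos_plus. ring. Qed.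

Lemma cos_diff p q : cos p - cos q = 2 * sin ((q - p)/2) * sin ((p+q)/2).
Proof. rewrite form2. replace ((q-p)/2) with (-((p-q)/2)) by field. rewrite sin_neg. ring. Qed.

Definition th (N : nat) (n : Z) : R := PI * IZR n / INR N.
Definition fz (N : nat) (n : Z) : R := 2 * sin (th N n).

Lemma brace_eq N n : brace N n = (0, fz N n).
Proof.
  unfold brace, vpow, cexpi, fz, th, Cminus, Copp, Cplus. simpl.
  rewrite opp_IZR. replace (PI * - IZR n / INR N) with (- (PI * IZR n / INR N)) by (unfold Rdiv; ring).
  rewrite cos_neg, sin_neg. f_equal; ring.
Qed.

Fixpoint cI (n : nat) : C := match n with O => RtoC 1 | S k => Cmult (0,1) (cI k) end.

Lemma prodC_imag {A} (g : A -> R) (s : list A) :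
  fold_right Cmult (RtoC 1) (map (fun x => (0, g x)) s) =
  Cmult (cI (length s)) (fold_right Rmult 1 (map g s), 0).
Proof.
  induction s; simpl.
  - unfold Cmult, RtoC; simpl; f_equal; ring.
  - rewrite IHs. destruct (cI (length s)) as [c1 c2].
    unfold Cmult; simpl; f_equal; ring.
Qed.

Lemma cI_odd l : cI (2 * l + 1) = (0, (-1)^l).
Proof.
  induction l.
  - simpl. unfold Cmult, RtoC; simpl; f_equal; ring.
  - replace (2 * S l + 1)%nat with (S (S (2 * l + 1))) by lia.
    set (n := (2 * l + 1)%nat) in *. simpl cI. rewrite IHl. unfold Cmult; simpl; f_equal; ring.
Qed.

Definition tt (N : nat) (j : Z) (l : nat) : R :=
  fold_right Rmult 1 (map (fun i => fz N (j - Z.of_nat l + Z.of_nat i)) (seq 0 (2 * l + 1))).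

Lemma Sfun_eq N j l : Sfun N (j - Z.of_nat l) (j + Z.of_nat l) = (0, (-1)^l * tt N j l).
Proof.
  unfold Sfun, Cprod_range, Zrange.
  replace (Z.to_nat (j + Z.of_nat l - (j - Z.of_nat l) + 1)) with (2 * l + 1)%nat by lia.
  rewrite map_map.
  rewrite (map_ext _ (fun i => (0, fz N (j - Z.of_nat l + Z.of_nat i)))) by (intros; apply brace_eq).
  rewrite prodC_imag, length_seq, cI_odd. unfold tt.
  unfold Cmult; simpl; f_equal; ring.
Qed.

Definition hh (N : nat) (j : Z) (l : nat) : R :=
  fold_right Rplus 0 (map (fun i => / (fz N (j - (1 + Z.of_nat i)) * fz N (j + (1 + Z.of_nat i)))) (seq 0 l)).

Lemma Csum_real {A} (X : A -> R) (s : list A) :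
  fold_right Cplus (RtoC 0) (map (fun i => (X i, 0)) s) = (fold_right Rplus 0 (map X s), 0).
Proof. induction s; simpl; [reflexivity|]. rewrite IHs. unfold Cplus; simpl; f_equal; ring. Qed.

Lemma fold_Rplus_opp {A} (F : A -> R) s :
  fold_right Rplus 0 (map (fun i => - F i) s) = - fold_right Rplus 0 (map F s).
Proof. induction s; simpl; [ring|]. rewrite IHs. ring. Qed.

Lemma Cinv_imag2 a b : a * b <> 0 -> Cinv (Cmult (0,a) (0,b)) = (- / (a * b), 0).
Proof. intros H. unfold Cinv, Cmult; cbn [fst snd]. assert (a <> 0) by (intro; apply H; subst; ring). assert (b <> 0) by (intro; apply H; subst; ring). f_equal; field; tauto. Qed.

Lemma Hsum_eq N j l :
  (forall i, (i < l)%nat -> fz N (j - (1 + Z.of_nat i)) * fz N (j + (1 + Z.of_nat i)) <> 0) ->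
  Csum_range 1 (Z.of_nat l) (fun k => Cinv (Afun N j k)) = (- hh N j l, 0).
Proof.
  intros Hnz. unfold Csum_range, Zrange.
  replace (Z.to_nat (Z.of_nat l - 1 + 1)) with l by lia.
  rewrite map_map.
  rewrite (map_ext_in _ (fun i => (- / (fz N (j - (1 + Z.of_nat i)) * fz N (j + (1 + Z.of_nat i))), 0))).
  - rewrite Csum_real. unfold hh. f_equal.
    apply fold_Rplus_opp.
  - intros i Hi. apply in_seq in Hi. specialize (Hnz i ltac:(lia)).
    unfold Afun. rewrite !brace_eq. apply Cinv_imag2. 
    replace (Z.add 1 (Z.of_nat i)) with (Z.add 1 (Z.of_nat i)) by reflexivity. exact Hnz.
Qed.

Lemma cterm_eq N j : sin (th N j) <> 0 ->
  Cdiv (Cplus (vpow N j) (vpow N (- j))) (brace N j) = (0, - (cos (th N j) / sin (th N j))).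
Proof.
  intros H. rewrite brace_eq. unfold vpow, cexpi, fz.
  rewrite opp_IZR. replace (PI * - IZR j / INR N) with (- th N j) by (unfold th, Rdiv; ring).
  fold (th N j). rewrite cos_neg, sin_neg.
  unfold Cdiv, Cinv, Cmult, Cplus; cbn [fst snd]. f_equal; field; auto.
Qed.

Definition cotj N j := cos (th N j) / sin (th N j).

Lemma D1_eq N m j l :
  sin (th N j) <> 0 ->
  (forall i, (i < l)%nat -> fz N (j - (1 + Z.of_nat i)) * fz N (j + (1 + Z.of_nat i)) <> 0) ->
  D1 N m j (Z.of_nat l) =
  ((-1)^l * tt N j l * (cotj N j + 2 * fz N (2 * j) * hh N j l),
   (-1)^l * tt N j l * (IZR m * IZR j / 2)).
Proof.
  intros H1 H2. unfold D1. rewrite Sfun_eq, Hsum_eq by exact H2. rewrite cterm_eq by exact H1.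
  rewrite brace_eq. unfold cotj. unfold RtoC, Cmult, Cplus; cbn [fst snd]. f_equal; ring.
Qed.

Lemma Cmod_qpow N m j : Cmod (qpow N m j) = 1.
Proof. unfold qpow, cexpi, Cmod; cbn [fst snd]. rewrite <- sqrt_1. f_equal. rewrite <- (sin2_cos2 (PI * IZR m * IZR (j * j) / (4 * INR N))). unfold Rsqr. ring. Qed.

Lemma Cmod_le_abs x y : Cmod (x, y) <= Rabs x + Rabs y.
Proof.
  unfold Cmod; cbn [fst snd].
  pose proof (Rabs_pos x). pose proof (Rabs_pos y).
  rewrite <- (sqrt_pow2 (Rabs x + Rabs y)) by lra. apply sqrt_le_1_alt.
  rewrite <- (pow2_abs x), <- (pow2_abs y). nra.
Qed.



Lemma INR_N_pos N : (1 <= N)%nat -> 0 < INR N.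
Proof. intros; apply lt_0_INR; lia. Qed.

Lemma fz_pos N n : (0 < n)%Z -> (n < Z.of_nat N)%Z -> 0 < fz N n.
Proof.
  intros H1 H2. unfold fz, th.
  assert (0 < INR N) by (apply INR_N_pos; lia).
  assert (0 < IZR n) by (apply IZR_lt; lia).
  assert (IZR n < INR N) by (rewrite INR_IZR_INZ; apply IZR_lt; lia).
  assert (0 < sin (PI * IZR n / INR N)); [|lra].
  apply sin_gt_0.
  - apply Rdiv_lt_0_compat; [apply Rmult_lt_0_compat; [apply PI_RGT_0|]|]; lra.
  - apply (Rmult_lt_reg_r (INR N)); [lra|]. unfold Rdiv. rewrite Rmult_assoc, Rinv_l by lra.
    pose proof PI_RGT_0. nra.
Qed.

Lemma fz_le2 N n : fz N n <= 2.
Proof. unfold fz. pose proof (SIN_bound (th N n)). lra. Qed.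

Definition aa N j (k : Z) := fz N (j - k) * fz N (j + k).

Lemma aa_cos N j k : (1 <= N)%nat -> aa N j k = 2 * cos (th N (2 * k)) - 2 * cos (th N (2 * j)).
Proof.
  intros HN. assert (0 < INR N) by (apply INR_N_pos; lia).
  unfold aa, fz. rewrite two_sin_prod. unfold th. rewrite !minus_IZR, !plus_IZR, !mult_IZR.
  f_equal; [f_equal; f_equal; field; lra|f_equal; f_equal; field; lra].
Qed.

Lemma aa_decr N j k : (1 <= N)%nat -> (0 <= k)%Z -> (2 * (k + 1) <= Z.of_nat N)%Z ->
  aa N j (k + 1) <= aa N j k.
Proof.
  intros HN H1 H2. rewrite !aa_cos by lia.
  assert (0 < INR N) by (apply INR_N_pos; lia).
  assert (cos (th N (2 * (k+1))) <= cos (th N (2 * k))); [|lra].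
  unfold th. rewrite !mult_IZR, plus_IZR.
  pose proof PI_RGT_0.
  assert (0 <= IZR k) by (apply IZR_le; lia).
  assert (2 * (IZR k + 1) <= INR N) by (rewrite INR_IZR_INZ; replace 2 with (IZR 2) by reflexivity; rewrite <- plus_IZR, <- mult_IZR; apply IZR_le; lia).
  left. apply cos_decreasing_1.
  - apply Rmult_le_pos; [nra|]. left; apply Rinv_0_lt_compat; lra.
  - apply (Rmult_le_reg_r (INR N)); [lra|]. unfold Rdiv. rewrite Rmult_assoc, Rinv_l by lra. nra.
  - apply Rmult_le_pos; [nra|]. left; apply Rinv_0_lt_compat; lra.
  - apply (Rmult_le_reg_r (INR N)); [lra|]. unfold Rdiv. rewrite Rmult_assoc, Rinv_l by lra. nra.
  - apply Rmult_lt_compat_r; [apply Rinv_0_lt_compat; lra|]. nra.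
Qed.

Lemma map_seq_shift {B} (F : nat -> B) a n : map F (seq a n) = map (fun i => F (a + i)%nat) (seq 0 n).
Proof.
  revert F a; induction n; intros F a; [reflexivity|].
  simpl. rewrite Nat.add_0_r. f_equal. rewrite IHn. symmetry. rewrite IHn.
  apply map_ext. intros; f_equal; lia.
Qed.

Lemma tt_S N j l : tt N j (S l) = aa N j (Z.of_nat (S l)) * tt N j l.
Proof.
  unfold tt, aa.
  replace (2 * S l + 1)%nat with (1 + ((2 * l + 1) + 1))%nat by lia.
  rewrite (seq_app 1 ((2*l+1)+1) 0), (seq_app (2*l+1) 1 (0+1)), !fold_Rmult_app.
  change (seq 0 1) with (0%nat :: nil).
  replace (seq (0 + 1 + (2 * l + 1)) 1) with ((2 * l + 2)%nat :: nil) by (simpl; f_equal; f_equal; lia).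
  rewrite (map_seq_shift _ (0 + 1)).
  cbn [map fold_right].
  replace (map (fun i : nat => fz N (j - Z.of_nat (S l) + Z.of_nat (0 + 1 + i))) (seq 0 (2 * l + 1)))
    with (map (fun i : nat => fz N (j - Z.of_nat l + Z.of_nat i)) (seq 0 (2 * l + 1))).
  2:{ apply map_ext; intros; f_equal; lia. }
  replace (j - Z.of_nat (S l) + Z.of_nat 0)%Z with (j - Z.of_nat (S l))%Z by lia.
  replace (j - Z.of_nat (S l) + Z.of_nat (2 * l + 2))%Z with (j + Z.of_nat (S l))%Z by lia.
  ring.
Qed.

Lemma hh_S N j l : hh N j (S l) = hh N j l + / aa N j (Z.of_nat (S l)).
Proof.
  unfold hh, aa. rewrite seq_S, map_app, fold_right_app. cbn [map fold_right].
  rewrite fold_Rplus_acc. replace (1 + Z.of_nat l)%Z with (Z.of_nat (S l)) by lia. replace (1 + Z.of_nat (0 + l))%Z with (Z.of_nat (S l)) by lia. ring.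
Qed.

Lemma hh_0 N j : hh N j 0 = 0.
Proof. reflexivity. Qed.

Lemma tt_0 N j : tt N j 0 = fz N j.
Proof. unfold tt; simpl. replace (j - 0 + 0)%Z with j by lia. ring. Qed.



Lemma rsum_ext (F G : nat -> R) n : (forall i, (i < n)%nat -> F i = G i) -> rsum F n = rsum G n.
Proof. induction n; simpl; intros H; [reflexivity|]. rewrite IHn, H; auto. Qed.

Lemma aa_pos N j k : (1 <= k)%Z -> (k < j)%Z -> (2 * j < Z.of_nat N)%Z -> 0 < aa N j k.
Proof. intros; unfold aa; apply Rmult_lt_0_compat; apply fz_pos; lia. Qed.

Lemma tt_pos N j l : (1 <= j)%Z -> (2 * j < Z.of_nat N)%Z -> (Z.of_nat l < j)%Z -> 0 < tt N j l.
Proof.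
  intros H1 H2. induction l; intros H3.
  - rewrite tt_0. apply fz_pos; lia.
  - rewrite tt_S. apply Rmult_lt_0_compat; [apply aa_pos; lia| apply IHl; lia].
Qed.

Definition uu N j l := tt N j l * hh N j l.

Lemma uu_S N j l : (1 <= j)%Z -> (2 * j < Z.of_nat N)%Z -> (Z.of_nat (S l) < j)%Z ->
  uu N j (S l) = aa N j (Z.of_nat (S l)) * uu N j l + tt N j l.
Proof.
  intros H1 H2 H3. unfold uu. rewrite tt_S, hh_S.
  assert (0 < aa N j (Z.of_nat (S l))) by (apply aa_pos; lia). field. lra.
Qed.

Lemma uu_0 N j : uu N j 0 = 0.
Proof. unfold uu; rewrite hh_0; ring. Qed.

Lemma uu_le N j l : (1 <= N)%nat -> (1 <= j)%Z -> (2 * j < Z.of_nat N)%Z -> (Z.of_nat (S l) < j)%Z ->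
  0 <= uu N j (S l) <= INR (S l) * tt N j l.
Proof.
  intros HN H1 H2. induction l; intros H3.
  - rewrite uu_S, uu_0 by lia. simpl INR. pose proof (tt_pos N j 0 H1 H2 ltac:(lia)). lra.
  - rewrite uu_S by lia. specialize (IHl ltac:(lia)).
    rewrite (tt_S N j l).
    pose proof (aa_decr N j (Z.of_nat (S l)) HN ltac:(lia) ltac:(lia)) as Hd.
    replace (Z.of_nat (S l) + 1)%Z with (Z.of_nat (S (S l))) in Hd by lia.
    pose proof (aa_pos N j (Z.of_nat (S (S l))) ltac:(lia) ltac:(lia) H2).
    pose proof (tt_pos N j l H1 H2 ltac:(lia)).

    rewrite !S_INR in *.
    pose proof (pos_INR l).
    set (a2 := aa N j (Z.of_nat (S (S l)))) in *. set (a1 := aa N j (Z.of_nat (S l))) in *.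
    set (u := uu N j (S l)) in *. set (t := tt N j l) in *.
    assert (a2 * u <= a1 * u) by nra. assert (a1 * u <= a1 * ((INR l + 1) * t)) by nra.
    split; nra.
Qed.

Lemma tt_prop N j l : (1 <= N)%nat -> (1 <= j)%Z -> (2 * j < Z.of_nat N)%Z -> (Z.of_nat (S (S l)) < j)%Z ->
  tt N j (S l) < tt N j l -> tt N j (S (S l)) < tt N j (S l).
Proof.
  intros HN H1 H2 H3 H. rewrite (tt_S N j (S l)). rewrite (tt_S N j l) in *.
  pose proof (aa_decr N j (Z.of_nat (S l)) HN ltac:(lia) ltac:(lia)) as Hd.
  replace (Z.of_nat (S l) + 1)%Z with (Z.of_nat (S (S l))) in Hd by lia.
  pose proof (tt_pos N j l H1 H2 ltac:(lia)).
  pose proof (aa_pos N j (Z.of_nat (S (S l))) ltac:(lia) ltac:(lia) H2).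
  pose proof (aa_pos N j (Z.of_nat (S l)) ltac:(lia) ltac:(lia) H2).
  nra.
Qed.

Lemma uu_prop N j l : (1 <= N)%nat -> (1 <= j)%Z -> (2 * j < Z.of_nat N)%Z -> (Z.of_nat (S (S l)) < j)%Z ->
  uu N j (S l) < uu N j l -> uu N j (S (S l)) < uu N j (S l).
Proof.
  intros HN H1 H2 H3 H. rewrite (uu_S N j (S l)) by lia. rewrite (uu_S N j l) in * by lia.
  rewrite (tt_S N j l).
  pose proof (aa_decr N j (Z.of_nat (S l)) HN ltac:(lia) ltac:(lia)) as Hd.
  replace (Z.of_nat (S l) + 1)%Z with (Z.of_nat (S (S l))) in Hd by lia.
  pose proof (tt_pos N j l H1 H2 ltac:(lia)).
  pose proof (aa_pos N j (Z.of_nat (S (S l))) ltac:(lia) ltac:(lia) H2).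
  pose proof (aa_pos N j (Z.of_nat (S l)) ltac:(lia) ltac:(lia) H2).
  set (a2 := aa N j (Z.of_nat (S (S l)))) in *. set (a1 := aa N j (Z.of_nat (S l))) in *.
  assert (Hu0 : 0 <= uu N j l).
  { destruct l; [rewrite uu_0; lra| apply (uu_le N j l HN H1 H2); lia]. }
  set (u := uu N j l) in *. set (t := tt N j l) in *.
  assert (0 <= a1 * u) by (apply Rmult_le_pos; lra). assert (Hu : 0 < u) by lra.
  assert (Ha1 : a1 < 1) by (destruct (Rlt_dec a1 1); [auto| assert (u <= a1 * u) by nra; lra]).
  assert (a2 * (a1 * u + t) <= a1 * (a1 * u + t)) by nra.
  assert (a1 * (a1 * u + t) + a1 * t < a1 * u + t); [|lra].
  assert (HA : a1 * u * (a1 - 1) < 0) by (assert (0 < a1 * u) by nra; nra).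
  destruct (Rle_dec (1/2) a1).
  - assert ((u - a1 * u - t) * (2 * a1 - 1) >= 0) by nra.
    assert ((1 - a1) * u * (a1 - 1) < 0) by (assert (0 < (1-a1)*u) by nra; nra).
    nra.
  - assert (t * (2 * a1 - 1) < 0) by nra. nra.
Qed.

Lemma rsum_scal (F : nat -> R) c n : rsum (fun i => c * F i) n = c * rsum F n.
Proof. induction n; simpl; [ring| rewrite IHn; ring]. Qed.

Lemma IZR_j_le N j : (2 * j < Z.of_nat N)%Z -> (1 <= j)%Z -> 1 <= IZR j <= INR N.
Proof.
  intros. split; [apply IZR_le; lia|]. rewrite INR_IZR_INZ. apply IZR_le; lia.
Qed.

Lemma th_range N j : (2 <= N)%nat -> (1 <= j)%Z -> (2 * j < Z.of_nat N)%Z ->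
  PI / INR N <= th N j <= PI / 2.
Proof.
  intros HN H1 H2. unfold th. assert (0 < INR N) by (apply INR_N_pos; lia).
  pose proof PI_RGT_0.
  assert (1 <= IZR j) by (apply IZR_le; lia).
  assert (2 * IZR j <= INR N) by (rewrite INR_IZR_INZ; replace 2 with (IZR 2) by reflexivity;
    rewrite <- mult_IZR; apply IZR_le; lia).
  split.
  - unfold Rdiv. apply Rmult_le_compat_r; [left; apply Rinv_0_lt_compat; lra| nra].
  - apply (Rmult_le_reg_r (INR N)); [lra|]. unfold Rdiv. rewrite Rmult_assoc, Rinv_l by lra. nra.
Qed.

Lemma cot_bound N j : (2 <= N)%nat -> (1 <= j)%Z -> (2 * j < Z.of_nat N)%Z ->
  0 < sin (th N j) /\ 0 <= cotj N j <= INR N.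
Proof.
  intros HN H1 H2. pose proof (th_range N j HN H1 H2).
  assert (0 < INR N) by (apply INR_N_pos; lia). pose proof PI_gt3.
  assert (0 < PI / INR N) by (apply Rdiv_lt_0_compat; lra).
  assert (Hs : th N j / 3 <= sin (th N j)) by (apply sin_ge_third; lra).
  assert (Hs2 : 1 / INR N <= sin (th N j)).
  { eapply Rle_trans; [|exact Hs]. apply (Rmult_le_reg_r (3 * INR N)); [lra|].
    unfold Rdiv. field_simplify; try lra.
    assert (PI <= th N j * INR N); [|lra].
    apply (Rmult_le_reg_r (/ INR N)); [apply Rinv_0_lt_compat; lra|].
    rewrite Rmult_assoc, Rinv_r by lra. lra. }
  assert (0 < sin (th N j)) by (assert (0 < 1 / INR N) by (apply Rdiv_lt_0_compat; lra); lra).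
  assert (0 <= cos (th N j)) by (apply cos_ge_0; lra).
  pose proof (COS_bound (th N j)).
  split; auto. unfold cotj. split.
  - apply Rdiv_le_0_compat; lra.
  - apply (Rmult_le_reg_r (sin (th N j))); [lra|]. unfold Rdiv. rewrite Rmult_assoc, Rinv_l by lra.
    assert (1 <= INR N * sin (th N j)).
    { apply (Rmult_le_reg_r (/ INR N)); [apply Rinv_0_lt_compat; lra|].
      replace (INR N * sin (th N j) * / INR N) with (sin (th N j)) by (field; lra). lra. }
    lra.
Qed.

Lemma inner_bound N m j T : (2 <= N)%nat -> (1 <= j)%Z -> (2 * j < Z.of_nat N)%Z ->
  (forall l, (Z.of_nat l < j)%Z -> tt N j l <= T) ->
  Cmod (Csum_range 0 (j - 1) (fun l => Cmult (qpow N m j) (D1 N m j l))) <=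
  (10 + Rabs (IZR m)) * INR N * T.
Proof.
  intros HN H1 H2 HT.
  destruct (cot_bound N j HN H1 H2) as [Hsin [Hc1 Hc2]].
  set (n := Z.to_nat j).
  set (cot := cotj N j) in *. set (c2 := 2 * fz N (2 * j)).
  set (ReF := fun i => (-1)^i * tt N j i * (cot + c2 * hh N j i)).
  set (ImF := fun i => (-1)^i * tt N j i * (IZR m * IZR j / 2)).
  assert (Heq : Csum_range 0 (j - 1) (fun l => Cmult (qpow N m j) (D1 N m j l)) =
                Cmult (qpow N m j) (rsum ReF n, rsum ImF n)).
  { unfold Csum_range, Zrange.
    replace (Z.to_nat (j - 1 - 0 + 1)) with n by (unfold n; lia).
    rewrite map_map.
    rewrite (map_ext_in _ (fun i => Cmult (qpow N m j) (ReF i, ImF i))).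
    - rewrite Csum_scal, Csum_pairs, !fold_seq_rsum. reflexivity.
    - intros i Hi. apply in_seq in Hi. rewrite Z.add_0_l. f_equal.
      rewrite D1_eq; [reflexivity| lra|].
      intros i' Hi'. apply Rgt_not_eq, Rmult_lt_0_compat; apply fz_pos; unfold n in *; lia. }
  rewrite Heq, Cmod_mult, Cmod_qpow, Rmult_1_l.
  eapply Rle_trans; [apply Cmod_le_abs|].
  assert (HRe : rsum ReF n = cot * alt (tt N j) n + c2 * alt (uu N j) n).
  { unfold alt. rewrite <- rsum_lin. apply rsum_ext. intros i _. unfold ReF, uu. ring. }
  assert (HIm : rsum ImF n = (IZR m * IZR j / 2) * alt (tt N j) n).
  { unfold alt. rewrite <- rsum_scal. apply rsum_ext. intros i _. unfold ImF. ring. }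
  assert (HT0 : 0 < T) by (eapply Rlt_le_trans; [apply (tt_pos N j 0); lia| apply HT; lia]).
  assert (HN0 : 0 < INR N) by (apply INR_N_pos; lia).
  assert (Ha : Rabs (alt (tt N j) n) <= 2 * T).
  { apply alt_bound; [lra| |].
    - intros l Hl. split; [left; apply tt_pos; unfold n in *; lia| apply HT; unfold n in *; lia].
    - intros l Hl. apply tt_prop; unfold n in *; lia. }
  assert (Hb : Rabs (alt (uu N j) n) <= 2 * (INR N * T)).
  { apply alt_bound; [nra| |].
    - intros l Hl. destruct l as [|l].
      + rewrite uu_0. split; nra.
      + destruct (uu_le N j l ltac:(lia) H1 H2 ltac:(unfold n in *; lia)) as [Hu1 Hu2].
        split; auto. eapply Rle_trans; [exact Hu2|].
        assert (INR (S l) <= INR N) by (apply le_INR; unfold n in *; lia).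
        assert (tt N j l <= T) by (apply HT; unfold n in *; lia).
        pose proof (pos_INR (S l)). pose proof (tt_pos N j l H1 H2 ltac:(unfold n in *; lia)). nra.
    - intros l Hl. apply uu_prop; unfold n in *; lia. }
  assert (Hc2b : Rabs c2 <= 4).
  { unfold c2, fz. pose proof (SIN_bound (th N (2 * j))). apply Rabs_le. lra. }
  destruct (IZR_j_le N j H2 H1) as [Hj1 Hj2].
  rewrite HRe, HIm.
  assert (Rabs (cot * alt (tt N j) n + c2 * alt (uu N j) n) <= INR N * (2 * T) + 4 * (2 * (INR N * T))).
  { eapply Rle_trans; [apply Rabs_triang|]. rewrite !Rabs_mult.
    rewrite (Rabs_pos_eq cot) by lra.
    pose proof (Rabs_pos (alt (tt N j) n)). pose proof (Rabs_pos (alt (uu N j) n)). pose proof (Rabs_pos c2).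
    apply Rplus_le_compat; apply Rmult_le_compat; auto; lra. }
  assert (Rabs (IZR m * IZR j / 2 * alt (tt N j) n) <= Rabs (IZR m) * INR N * T).
  { unfold Rdiv. rewrite !Rabs_mult. rewrite (Rabs_pos_eq (IZR j)) by lra.
    rewrite (Rabs_pos_eq (/ 2)) by lra.
    pose proof (Rabs_pos (IZR m)). pose proof (Rabs_pos (alt (tt N j) n)).
    assert (Rabs (IZR m) * IZR j <= Rabs (IZR m) * INR N) by (apply Rmult_le_compat_l; lra).
    assert (0 <= Rabs (IZR m) * IZR j) by nra.
    assert (Rabs (IZR m) * IZR j * / 2 * Rabs (alt (tt N j) n) <= Rabs (IZR m) * IZR j * / 2 * (2 * T)) by (apply Rmult_le_compat_l; nra).
    nra. }
  nra.
Qed.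



Definition gn (N r : nat) : R := 2 * sin (INR r * PI / INR N).

Lemma fz_gn N r : fz N (Z.of_nat r) = gn N r.
Proof. unfold fz, th, gn. rewrite <- INR_IZR_INZ. f_equal. f_equal. unfold Rdiv; ring. Qed.

Lemma angle_le N r p q : (1 <= N)%nat -> (q * r <= p * N)%nat -> (0 < q)%nat ->
  INR r * PI / INR N <= INR p * PI / INR q.
Proof.
  intros HN H Hq. assert (0 < INR N) by (apply INR_N_pos; lia).
  assert (0 < INR q) by (apply lt_0_INR; lia).
  apply le_INR in H. rewrite !mult_INR in H. pose proof PI_RGT_0.
  apply (Rmult_le_reg_r (INR N * INR q)); [nra|].
  replace (INR r * PI / INR N * (INR N * INR q)) with (PI * (INR q * INR r)) by (field; lra).
  replace (INR p * PI / INR q * (INR N * INR q)) with (PI * (INR p * INR N)) by (field; lra).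
  apply Rmult_le_compat_l; lra.
Qed.

Lemma angle_ge N r p q : (1 <= N)%nat -> (p * N <= q * r)%nat -> (0 < q)%nat ->
  INR p * PI / INR q <= INR r * PI / INR N.
Proof.
  intros HN H Hq. assert (0 < INR N) by (apply INR_N_pos; lia).
  assert (0 < INR q) by (apply lt_0_INR; lia).
  apply le_INR in H. rewrite !mult_INR in H. pose proof PI_RGT_0.
  apply (Rmult_le_reg_r (INR N * INR q)); [nra|].
  replace (INR r * PI / INR N * (INR N * INR q)) with (PI * (INR q * INR r)) by (field; lra).
  replace (INR p * PI / INR q * (INR N * INR q)) with (PI * (INR p * INR N)) by (field; lra).
  apply Rmult_le_compat_l; lra.
Qed.

Lemma gn_pos N r : (1 <= r)%nat -> (r < N)%nat -> 0 < gn N r.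
Proof. intros. rewrite <- fz_gn. apply fz_pos; lia. Qed.

Lemma gn_ge1 N r : (1 <= N)%nat -> (N <= 6 * r)%nat -> (6 * r <= 5 * N)%nat -> 1 <= gn N r.
Proof.
  intros HN H1 H2. unfold gn.
  assert (1/2 <= sin (INR r * PI / INR N)); [|lra].
  apply sin_ge_half. split.
  - replace (PI / 6) with (INR 1 * PI / INR 6) by (simpl; field). apply angle_ge; lia.
  - replace (PI - PI / 6) with (INR 5 * PI / INR 6) by (simpl; field). apply angle_le; lia.
Qed.

Lemma gn_le1 N r : (1 <= N)%nat -> (r <= N)%nat -> (6 * r <= N \/ 5 * N <= 6 * r)%nat -> gn N r <= 1.
Proof.
  intros HN H1 H2. unfold gn.
  assert (sin (INR r * PI / INR N) <= 1/2); [|lra].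
  apply sin_le_half. pose proof PI_RGT_0.
  assert (0 <= INR r * PI / INR N).
  { assert (0 < INR N) by (apply INR_N_pos; lia). pose proof (pos_INR r).
    apply Rdiv_le_0_compat; nra. }
  assert (INR r * PI / INR N <= PI).
  { replace PI with (INR 1 * PI / INR 1) at 2 by (simpl; field). apply angle_le; lia. }
  destruct H2.
  - left. split; auto. replace (PI / 6) with (INR 1 * PI / INR 6) by (simpl; field). apply angle_le; lia.
  - right. split; auto. replace (PI - PI / 6) with (INR 5 * PI / INR 6) by (simpl; field). apply angle_ge; lia.
Qed.

Lemma div_bounds x d : (0 < d)%nat -> (d * (x / d) <= x < d * (x / d) + d)%nat.
Proof. intros. pose proof (Nat.div_mod_eq x d). pose proof (Nat.mod_upper_bound x d ltac:(lia)). lia. Qed.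

Lemma seq_split3 s m k l : seq s (m + (k + l)) = seq s m ++ seq (s + m) k ++ seq (s + m + k) l.
Proof. rewrite !seq_app. reflexivity. Qed.

Definition Mmid (N : nat) : R := fold_right Rmult 1 (map (gn N) (seq (N/6 + 1) (5*N/6 - N/6))).

Definition Gf (N r : nat) : R := if (andb (N/6 <? r)%nat (r <=? 5*N/6)%nat) then gn N r else 1.

Lemma prod_le_Mmid N a len : (6 <= N)%nat -> (1 <= a)%nat -> (a + len <= N)%nat ->
  fold_right Rmult 1 (map (gn N) (seq a len)) <= Mmid N.
Proof.
  intros HN Ha Hl.
  pose proof (div_bounds N 6 ltac:(lia)). pose proof (div_bounds (5 * N) 6 ltac:(lia)).
  set (lo := (N/6)%nat) in *. set (hi := (5 * N / 6)%nat) in *.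
  apply Rle_trans with (fold_right Rmult 1 (map (Gf N) (seq a len))).
  { apply fold_Rmult_le. intros r Hr. apply in_seq in Hr.
    pose proof (gn_pos N r ltac:(lia) ltac:(lia)). split; [lra|].
    unfold Gf. fold lo hi. destruct (andb (lo <? r)%nat (r <=? hi)%nat) eqn:E; [lra|].
    apply gn_le1; [lia|lia|].
    apply andb_false_iff in E. destruct E as [E|E]; [apply Nat.ltb_ge in E| apply Nat.leb_gt in E]; lia. }
  assert (HG1 : forall r, (1 <= r)%nat -> (r < N)%nat -> 1 <= Gf N r).
  { intros r H1 H2. unfold Gf. fold lo hi. destruct (andb (lo <? r)%nat (r <=? hi)%nat) eqn:E; [|lra].
    apply andb_true_iff in E. destruct E as [E1 E2]. apply Nat.ltb_lt in E1. apply Nat.leb_le in E2.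
    apply gn_ge1; lia. }
  assert (Hsplit : seq 1 (N - 1) = seq 1 (a - 1) ++ seq a len ++ seq (a + len) (N - a - len)).
  { assert (E : (N - 1 = (a - 1) + (len + (N - a - len)))%nat) by lia. rewrite E at 1.
    rewrite seq_split3. replace (1 + (a - 1))%nat with a by lia. reflexivity. }
  apply Rle_trans with (fold_right Rmult 1 (map (Gf N) (seq 1 (N - 1)))).
  { rewrite Hsplit, !fold_Rmult_app.
    assert (1 <= fold_right Rmult 1 (map (Gf N) (seq 1 (a - 1)))) by
      (apply fold_Rmult_ge1; intros r Hr; apply in_seq in Hr; apply HG1; lia).
    assert (1 <= fold_right Rmult 1 (map (Gf N) (seq (a + len) (N - a - len)))) by
      (apply fold_Rmult_ge1; intros r Hr; apply in_seq in Hr; apply HG1; lia).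
    assert (0 <= fold_right Rmult 1 (map (Gf N) (seq a len))) by
      (left; apply fold_Rmult_pos; intros r Hr; apply in_seq in Hr; pose proof (HG1 r ltac:(lia) ltac:(lia)); lra).
    set (X := fold_right Rmult 1 (map (Gf N) (seq a len))) in *.
    set (Y := fold_right Rmult 1 (map (Gf N) (seq 1 (a - 1)))) in *.
    set (Z := fold_right Rmult 1 (map (Gf N) (seq (a + len) (N - a - len)))) in *.
    assert (X <= Y * X) by nra. assert (0 <= Y * X) by nra. nra. }
  right.
  assert (Hsplit2 : seq 1 (N - 1) = seq 1 lo ++ seq (lo + 1) (hi - lo) ++ seq (hi + 1) (N - 1 - hi)).
  { assert (E : (N - 1 = lo + ((hi - lo) + (N - 1 - hi)))%nat) by lia. rewrite E at 1.
    rewrite seq_split3. replace (1 + lo)%nat with (lo + 1)%nat by lia.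
    replace (lo + 1 + (hi - lo))%nat with (hi + 1)%nat by lia. reflexivity. }
  rewrite Hsplit2, !fold_Rmult_app.
  rewrite (fold_Rmult_one (Gf N) (seq 1 lo)).
  2:{ intros r Hr; apply in_seq in Hr. unfold Gf; fold lo hi.
      replace (andb (lo <? r)%nat (r <=? hi)%nat) with false; [reflexivity|].
      symmetry. apply andb_false_iff. left. apply Nat.ltb_ge. lia. }
  rewrite (fold_Rmult_one (Gf N) (seq (hi + 1) (N - 1 - hi))).
  2:{ intros r Hr; apply in_seq in Hr. unfold Gf; fold lo hi.
      replace (andb (lo <? r)%nat (r <=? hi)%nat) with false; [reflexivity|].
      symmetry. apply andb_false_iff. right. apply Nat.leb_gt. lia. }
  unfold Mmid. fold lo hi.
  rewrite (map_ext_in (Gf N) (gn N)).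
  2:{ intros r Hr; apply in_seq in Hr. unfold Gf; fold lo hi.
      replace (andb (lo <? r)%nat (r <=? hi)%nat) with true; [reflexivity|].
      symmetry. apply andb_true_iff. split; [apply Nat.ltb_lt| apply Nat.leb_le]; lia. }
  ring.
Qed.

Lemma Mmid_pos N : (6 <= N)%nat -> 0 < Mmid N.
Proof.
  intros HN. pose proof (div_bounds N 6 ltac:(lia)). pose proof (div_bounds (5 * N) 6 ltac:(lia)).
  unfold Mmid. apply fold_Rmult_pos. intros r Hr; apply in_seq in Hr. apply gn_pos; lia.
Qed.

Lemma FN_eq N : (6 <= N)%nat -> FN N = gn N (N / 6) * Mmid N.
Proof.
  intros HN. pose proof (div_bounds N 6 ltac:(lia)). pose proof (div_bounds (5 * N) 6 ltac:(lia)).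
  set (lo := (N/6)%nat) in *. set (hi := (5 * N / 6)%nat) in *.
  unfold FN. fold lo hi. unfold sinprod. change (fun r : nat => 2 * sin (INR r * PI / INR N)) with (gn N).
  assert (E : (hi = (lo - 1) + (1 + (hi - lo)))%nat) by lia. rewrite E at 1.
  rewrite seq_split3, !fold_Rmult_app. replace (1 + (lo - 1))%nat with lo by lia.
  replace (lo + 1)%nat with (lo + 1)%nat by reflexivity.
  unfold Mmid. fold lo hi. simpl seq. cbn [map fold_right].
  assert (0 < fold_right Rmult 1 (map (gn N) (seq 1 (lo - 1)))).
  { apply fold_Rmult_pos. intros r Hr; apply in_seq in Hr. apply gn_pos; lia. }
  field. lra.
Qed.

Lemma gn_lo_ge N : (60 <= N)%nat -> 1/2 <= gn N (N / 6).
Proof.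
  intros HN. pose proof (div_bounds N 6 ltac:(lia)).
  unfold gn. set (x := INR (N / 6) * PI / INR N).
  assert (Hx1 : INR 11 * PI / INR 72 <= x) by (apply angle_ge; lia).
  assert (Hx2 : x <= INR 1 * PI / INR 6) by (apply angle_le; lia).
  simpl INR in Hx1, Hx2. pose proof PI_gt3. pose proof PI_le4.
  assert (33/72 <= x) by (eapply Rle_trans; [|exact Hx1]; lra).
  assert (x <= 2/3) by (eapply Rle_trans; [exact Hx2|]; lra).
  pose proof (sin_lb3 x ltac:(lra)). nra.
Qed.



Lemma tt_seq N j l : (1 <= j - Z.of_nat l)%Z ->
  tt N j l = fold_right Rmult 1 (map (gn N) (seq (Z.to_nat (j - Z.of_nat l)) (2 * l + 1))).
Proof.
  intros H. unfold tt. rewrite (map_seq_shift (gn N)).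
  f_equal. apply map_ext. intros i. rewrite <- fz_gn. f_equal. lia.
Qed.

Lemma tt_le_Mmid N j l : (6 <= N)%nat -> (1 <= j - Z.of_nat l)%Z -> (j + Z.of_nat l < Z.of_nat N)%Z ->
  tt N j l <= Mmid N.
Proof.
  intros HN H1 H2. rewrite tt_seq by lia. apply prod_le_Mmid; lia.
Qed.

Lemma tt_le_pow4 N j l : (1 <= j)%Z -> (2 * j < Z.of_nat N)%Z -> (Z.of_nat l < j)%Z ->
  tt N j l <= 2 * 4 ^ l.
Proof.
  intros H1 H2. induction l; intros H3.
  - rewrite tt_0. simpl. pose proof (fz_le2 N j). lra.
  - rewrite tt_S. specialize (IHl ltac:(lia)).
    assert (aa N j (Z.of_nat (S l)) <= 4).
    { unfold aa. pose proof (fz_le2 N (j - Z.of_nat (S l))). pose proof (fz_le2 N (j + Z.of_nat (S l))).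
      pose proof (fz_pos N (j - Z.of_nat (S l)) ltac:(lia) ltac:(lia)).
      pose proof (fz_pos N (j + Z.of_nat (S l)) ltac:(lia) ltac:(lia)). nra. }
    pose proof (aa_pos N j (Z.of_nat (S l)) ltac:(lia) ltac:(lia) H2).
    pose proof (tt_pos N j l H1 H2 ltac:(lia)).
    simpl pow. nra.
Qed.

Lemma cos_ge_half t : 0 <= t <= PI/3 -> 1/2 <= cos t.
Proof.
  intros H. rewrite <- cos_PI3. destruct (Req_dec t (PI/3)); [subst; lra|].
  left. apply cos_decreasing_1; pose proof PI_RGT_0; lra.
Qed.

Lemma cos_le_mhalf t : PI - PI/3 <= t <= PI -> cos t <= - (1/2).
Proof.
  intros H. rewrite <- cos_PI3, <- Rtrigo_facts.cos_pi_minus. destruct (Req_dec t (PI - PI/3)); [subst; lra|].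
  left. apply cos_decreasing_1; pose proof PI_RGT_0; lra.
Qed.

Lemma th_nat N r : th N (Z.of_nat r) = INR r * PI / INR N.
Proof. unfold th. rewrite <- INR_IZR_INZ. unfold Rdiv; ring. Qed.

Lemma fz_j0_ge1 N : (2 <= N)%nat -> 1 <= fz N (Z.of_nat (N / 2)).
Proof.
  intros HN. pose proof (div_bounds N 2 ltac:(lia)). rewrite fz_gn. apply gn_ge1; lia.
Qed.

Lemma aa_j0_ge2 N k : (3 <= N)%nat -> (1 <= k)%nat -> (6 * k <= N)%nat ->
  2 <= aa N (Z.of_nat (N / 2)) (Z.of_nat k).
Proof.
  intros HN H1 H2. pose proof (div_bounds N 2 ltac:(lia)).
  rewrite aa_cos by lia.
  replace (2 * Z.of_nat k)%Z with (Z.of_nat (2 * k)) by lia.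
  replace (2 * Z.of_nat (N / 2))%Z with (Z.of_nat (2 * (N / 2))) by lia.
  rewrite !th_nat.
  pose proof PI_RGT_0.
  assert (A1 : 1/2 <= cos (INR (2 * k) * PI / INR N)).
  { apply cos_ge_half. split.
    - assert (0 < INR N) by (apply INR_N_pos; lia). pose proof (pos_INR (2*k)). apply Rdiv_le_0_compat; nra.
    - replace (PI/3) with (INR 1 * PI / INR 3) by (simpl; field). apply angle_le; lia. }
  assert (A2 : cos (INR (2 * (N / 2)) * PI / INR N) <= - (1/2)).
  { apply cos_le_mhalf. split.
    - replace (PI - PI/3) with (INR 2 * PI / INR 3) by (simpl; field). apply angle_ge; lia.
    - replace PI with (INR 1 * PI / INR 1) at 2 by (simpl; field). apply angle_le; lia. }
  lra.
Qed.

Lemma tt_j0_ge N L : (60 <= N)%nat -> (L <= N / 6)%nat -> 2 ^ L <= tt N (Z.of_nat (N / 2)) L.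
Proof.
  intros HN. pose proof (div_bounds N 2 ltac:(lia)). pose proof (div_bounds N 6 ltac:(lia)).
  induction L; intros HL.
  - rewrite tt_0. simpl. apply fz_j0_ge1; lia.
  - rewrite tt_S. specialize (IHL ltac:(lia)).
    pose proof (aa_j0_ge2 N (S L) ltac:(lia) ltac:(lia) ltac:(lia)).
    simpl pow. pose proof (pow_lt 2 L ltac:(lra)). nra.
Qed.

Lemma FN_lower N : (60 <= N)%nat -> 2 ^ (N / 6) <= 2 * FN N.
Proof.
  intros HN. pose proof (div_bounds N 2 ltac:(lia)). pose proof (div_bounds N 6 ltac:(lia)).
  pose proof (tt_j0_ge N (N/6) HN (le_n _)).
  pose proof (tt_le_Mmid N (Z.of_nat (N/2)) (N/6) ltac:(lia) ltac:(lia) ltac:(lia)).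
  rewrite FN_eq by lia. pose proof (gn_lo_ge N HN). pose proof (Mmid_pos N ltac:(lia)). nra.
Qed.

Lemma Mmid_le N : (60 <= N)%nat -> Mmid N <= 2 * FN N.
Proof.
  intros HN. rewrite FN_eq by lia. pose proof (gn_lo_ge N HN). pose proof (Mmid_pos N ltac:(lia)). nra.
Qed.

Lemma aa_cmp N j k : (2 <= N)%nat -> (1 <= k)%Z -> (k < j)%Z -> (j < Z.of_nat (N / 2))%Z ->
  aa N j k <= (1 - (IZR (Z.of_nat (N / 2) - j))^2 / (INR N)^2) * aa N (Z.of_nat (N / 2)) k.
Proof.
  intros HN H1 H2 H3. pose proof (div_bounds N 2 ltac:(lia)).
  set (j0 := Z.of_nat (N / 2)) in *.
  assert (HNp : 0 < INR N) by (apply INR_N_pos; lia).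
  assert (Hj0N : (2 * j0 <= Z.of_nat N)%Z) by (unfold j0; lia).
  assert (Hdiff : aa N j0 k - aa N j k = 4 * sin (th N (j0 - j)) * sin (th N (j + j0))).
  { rewrite !aa_cos by lia.
    replace (2 * cos (th N (2 * k)) - 2 * cos (th N (2 * j0)) - (2 * cos (th N (2 * k)) - 2 * cos (th N (2 * j))))
      with (2 * (cos (th N (2 * j)) - cos (th N (2 * j0)))) by ring.
    rewrite cos_diff. unfold th. rewrite !mult_IZR, !minus_IZR, !plus_IZR.
    replace ((PI * (2 * IZR j0) / INR N - PI * (2 * IZR j) / INR N) / 2) with (PI * (IZR j0 - IZR j) / INR N) by (field; lra).
    replace ((PI * (2 * IZR j) / INR N + PI * (2 * IZR j0) / INR N) / 2) with (PI * (IZR j + IZR j0) / INR N) by (field; lra).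
    ring. }
  set (E := IZR (j0 - j)).
  assert (HE1 : 1 <= E) by (unfold E; apply IZR_le; lia).
  assert (HE2 : 2 * E <= INR N) by (unfold E; rewrite INR_IZR_INZ; replace 2 with (IZR 2) by reflexivity; rewrite <- mult_IZR; apply IZR_le; lia).
  pose proof PI_gt3. pose proof PI_le4.
  assert (Hth : th N (j0 - j) = PI * E / INR N) by reflexivity.
  assert (Hth2 : th N (j0 - j) <= PI / 2).
  { rewrite Hth. apply (Rmult_le_reg_r (INR N)); [lra|]. unfold Rdiv. rewrite Rmult_assoc, Rinv_l by lra. nra. }
  assert (Hth0 : 0 <= th N (j0 - j)) by (rewrite Hth; apply Rdiv_le_0_compat; nra).
  assert (Hs1 : E / INR N <= sin (th N (j0 - j))).
  { eapply Rle_trans; [|apply sin_ge_third; lra]. rewrite Hth.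
    apply (Rmult_le_reg_r (INR N)); [lra|]. field_simplify; try lra. nra. }
  assert (Hs2 : sin (th N (j0 - j)) <= sin (th N (j + j0))).
  { apply sin_sym_ge; [lra|]. unfold th. rewrite plus_IZR. fold E. unfold E. rewrite minus_IZR.
    assert (IZR j + IZR j0 <= INR N - (IZR j0 - IZR j)).
    { rewrite INR_IZR_INZ. assert (2 * IZR j0 <= IZR (Z.of_nat N)) by (replace 2 with (IZR 2) by reflexivity; rewrite <- mult_IZR; apply IZR_le; lia). lra. }
    assert (IZR j0 - IZR j <= IZR j + IZR j0) by (assert (1 <= IZR j) by (apply IZR_le; lia); lra).
    split; apply (Rmult_le_reg_r (INR N)); try lra; unfold Rdiv;
      rewrite ?Rmult_assoc, ?Rinv_l by lra; [nra|].
    replace ((PI - PI * ((IZR j0 - IZR j) * / INR N)) * INR N) with (PI * (INR N - (IZR j0 - IZR j))) by (field; lra).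
    apply Rmult_le_compat_l; lra. }
  assert (Hd : 4 * (E / INR N)^2 <= aa N j0 k - aa N j k).
  { rewrite Hdiff. assert (0 <= E / INR N) by (apply Rdiv_le_0_compat; lra). nra. }
  assert (Ha4 : aa N j0 k <= 4).
  { unfold aa. pose proof (fz_le2 N (j0 - k)). pose proof (fz_le2 N (j0 + k)).
    pose proof (fz_pos N (j0 - k) ltac:(lia) ltac:(lia)). pose proof (fz_pos N (j0 + k) ltac:(lia) ltac:(lia)). nra. }
  assert (Ha0 : 0 <= aa N j0 k) by (left; unfold aa; apply Rmult_lt_0_compat; apply fz_pos; lia).
  replace (E ^ 2 / INR N ^ 2) with ((E / INR N)^2) by (field; lra).
  assert (0 <= (E / INR N)^2) by (apply pow2_ge_0).
  nra.
Qed.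

Lemma tt_pos2 N j l : (1 <= j - Z.of_nat l)%Z -> (j + Z.of_nat l < Z.of_nat N)%Z -> 0 < tt N j l.
Proof.
  intros H1 H2. rewrite tt_seq by lia. apply fold_Rmult_pos. intros r Hr; apply in_seq in Hr.
  apply gn_pos; lia.
Qed.

Lemma tt_cmp N j l : (2 <= N)%nat -> (1 <= j)%Z -> (j < Z.of_nat (N / 2))%Z -> (Z.of_nat l < j)%Z ->
  tt N j l <= 2 * (1 - (IZR (Z.of_nat (N / 2) - j))^2 / (INR N)^2) ^ l * tt N (Z.of_nat (N / 2)) l.
Proof.
  intros HN H1 H2. pose proof (div_bounds N 2 ltac:(lia)).
  set (rho := 1 - (IZR (Z.of_nat (N / 2) - j))^2 / (INR N)^2).
  assert (Hrho : 0 <= rho).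
  { unfold rho. assert (0 < INR N) by (apply INR_N_pos; lia).
    assert (0 <= IZR (Z.of_nat (N / 2) - j)) by (apply IZR_le; lia).
    assert (IZR (Z.of_nat (N / 2) - j) <= INR N) by (rewrite INR_IZR_INZ; apply IZR_le; lia).
    assert ((IZR (Z.of_nat (N / 2) - j))^2 <= (INR N)^2) by (apply pow_incr; lra).
    assert ((IZR (Z.of_nat (N / 2) - j))^2 / (INR N)^2 <= 1); [|lra].
    apply (Rmult_le_reg_r ((INR N)^2)); [nra|]. field_simplify; lra. }
  induction l; intros H3.
  - rewrite !tt_0, pow_O. pose proof (fz_le2 N j). pose proof (fz_j0_ge1 N HN). lra.
  - rewrite !tt_S. specialize (IHl ltac:(lia)).
    pose proof (aa_cmp N j (Z.of_nat (S l)) HN ltac:(lia) ltac:(lia) H2). fold rho in H0.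
    pose proof (aa_pos N j (Z.of_nat (S l)) ltac:(lia) ltac:(lia) ltac:(lia)).
    pose proof (tt_pos N j l H1 ltac:(lia) ltac:(lia)).
    assert (0 < aa N (Z.of_nat (N / 2)) (Z.of_nat (S l))) by (unfold aa; apply Rmult_lt_0_compat; apply fz_pos; lia).
    assert (0 < tt N (Z.of_nat (N / 2)) l) by (apply tt_pos2; lia).
    assert (0 <= rho ^ l) by (apply pow_le; lra).
    simpl pow.
    set (A := aa N j (Z.of_nat (S l))) in *. set (B := aa N (Z.of_nat (N / 2)) (Z.of_nat (S l))) in *.
    set (t := tt N j l) in *. set (t0 := tt N (Z.of_nat (N / 2)) l) in *.
    apply Rle_trans with ((rho * B) * (2 * rho ^ l * t0)).
    + apply Rmult_le_compat; lra.
    + lra.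
Qed.

Lemma bernoulli x n : 0 <= x <= 1 -> (1 - x) ^ n * (1 + INR n * x) <= 1.
Proof.
  intros Hx. induction n.
  - simpl. lra.
  - rewrite S_INR. simpl pow.
    assert (0 <= (1 - x)^n) by (apply pow_le; lra).
    assert ((1 - x) * (1 - x) ^ n * (1 + (INR n + 1) * x) = (1 - x)^n * (1 + INR n * x) - (1 - x)^n * (x * x * (INR n + 1))) by ring.
    pose proof (pos_INR n). assert (0 <= (1 - x)^n * (x * x * (INR n + 1))) by (apply Rmult_le_pos; nra).
    lra.
Qed.

Lemma pow_le1 x n : 0 <= x <= 1 -> x ^ n <= 1.
Proof. intros Hx; induction n; simpl; [lra|]. assert (0 <= x^n) by (apply pow_le; lra). nra. Qed.

Lemma pow_le_mono_dec x a b : 0 <= x <= 1 -> (a <= b)%nat -> x ^ b <= x ^ a.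
Proof.
  intros Hx Hab. replace b with (a + (b - a))%nat by lia. rewrite pow_add.
  assert (0 <= x ^ a) by (apply pow_le; lra).
  pose proof (pow_le1 x (b - a) Hx). nra.
Qed.

Lemma tt_final N j l : (60 <= N)%nat -> (1 <= j)%Z -> (j < Z.of_nat (N / 2))%Z -> (Z.of_nat l < j)%Z ->
  tt N j l <= 4 * FN N * (48 * INR N / (48 * INR N + (IZR (Z.of_nat (N / 2) - j))^2) + / 64 ^ (N / 48)).
Proof.
  intros HN H1 H2 H3.
  pose proof (div_bounds N 2 ltac:(lia)). pose proof (div_bounds N 6 ltac:(lia)). pose proof (div_bounds N 48 ltac:(lia)).
  set (k := (N / 48)%nat) in *.
  set (E := IZR (Z.of_nat (N / 2) - j)).
  assert (HNp : 0 < INR N) by (apply INR_N_pos; lia).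
  assert (HFN : 0 < FN N) by (rewrite FN_eq by lia; pose proof (gn_lo_ge N HN); pose proof (Mmid_pos N ltac:(lia)); nra).
  assert (H64 : 0 < 64 ^ k) by (apply pow_lt; lra).
  assert (HE0 : 0 <= E) by (unfold E; apply IZR_le; lia).
  assert (HEN : E <= INR N) by (unfold E; rewrite INR_IZR_INZ; apply IZR_le; lia).
  assert (Hfr : 0 <= 48 * INR N / (48 * INR N + E^2)) by (apply Rdiv_le_0_compat; nra).
  assert (Hinv : 0 < / 64 ^ k) by (apply Rinv_0_lt_compat; lra).
  destruct (le_lt_dec l k) as [Hl|Hl].
  - eapply Rle_trans; [apply tt_le_pow4; lia|].
    assert (4 ^ l <= 4 ^ k) by (apply Rle_pow; [lra|lia]).
    assert (HP : 2 ^ (8 * k) <= 2 ^ (N / 6)) by (apply Rle_pow; [lra|lia]).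
    pose proof (FN_lower N HN).
    rewrite pow_mult in HP. replace (2 ^ 8) with 256 in HP by (simpl; ring).
    assert (E256 : 256 ^ k = 4 ^ k * 64 ^ k) by (rewrite <- Rpow_mult_distr; f_equal; ring).
    assert (2 * 4 ^ k <= 4 * FN N * / 64 ^ k).
    { apply (Rmult_le_reg_r (64 ^ k)); [lra|].
      replace (4 * FN N * / 64 ^ k * 64 ^ k) with (4 * FN N) by (field; lra). nra. }
    nra.
  - assert (Hx : 0 <= E^2 / INR N ^ 2 <= 1).
    { split; [apply Rdiv_le_0_compat; nra|]. apply (Rmult_le_reg_r (INR N ^ 2)); [nra|].
      field_simplify; [|lra]. assert (E^2 <= INR N ^ 2) by (apply pow_incr; lra). lra. }
    set (x := E^2 / INR N ^ 2) in *.
    pose proof (tt_cmp N j l ltac:(lia) H1 H2 H3) as Hc. fold E in Hc. fold x in Hc.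
    pose proof (tt_le_Mmid N (Z.of_nat (N / 2)) l ltac:(lia) ltac:(lia) ltac:(lia)).
    pose proof (Mmid_le N HN).
    pose proof (bernoulli x (S k) Hx).
    pose proof (pow_le_mono_dec (1 - x) (S k) l ltac:(lra) ltac:(lia)).
    assert (0 <= (1 - x) ^ l) by (apply pow_le; lra).
    assert (0 < tt N (Z.of_nat (N / 2)) l) by (apply tt_pos2; lia).
    assert (Hk : INR N <= 48 * INR (S k)) by (replace 48 with (INR 48) by (simpl; ring); rewrite <- mult_INR; apply le_INR; lia).
    assert (Hrho : (1 - x) ^ (S k) <= 48 * INR N / (48 * INR N + E^2)).
    { assert (Hden : 48 * INR N + E^2 <= 48 * INR N * (1 + INR (S k) * x)).
      { unfold x. assert (E^2 * INR N <= E^2 * (48 * INR (S k))) by (apply Rmult_le_compat_l; nra).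
        apply (Rmult_le_reg_r (INR N)); [lra|].
        replace (48 * INR N * (1 + INR (S k) * (E ^ 2 / INR N ^ 2)) * INR N) with (48 * INR N * INR N + 48 * INR (S k) * E^2) by (field; lra).
        nra. }
      assert (0 < 1 + INR (S k) * x) by (pose proof (pos_INR (S k)); nra).
      apply (Rmult_le_reg_r (48 * INR N + E^2)); [nra|].
      unfold Rdiv. rewrite Rmult_assoc, Rinv_l by nra.
      assert (0 <= (1 - x) ^ S k) by (apply pow_le; lra). nra. }
    assert (2 * (1 - x) ^ l * tt N (Z.of_nat (N / 2)) l <= 2 * (1 - x) ^ l * (2 * FN N)) by (apply Rmult_le_compat_l; lra).
    assert (tt N j l <= 4 * FN N * (1 - x) ^ l) by lra.
    assert (4 * FN N * (1 - x) ^ l <= 4 * FN N * (48 * INR N / (48 * INR N + E^2))) by (apply Rmult_le_compat_l; lra).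
    nra.
Qed.



Lemma tele_bound s n : 2 <= s ->
  rsum (fun i => s^2 / (s^2 + (INR n - INR i)^2)) n <= 2 * s.
Proof.
  intros Hs.
  set (phi := fun i : nat => / (INR n - INR i + s)).
  apply Rle_trans with (rsum (fun i => 2 * s^2 * (phi (S i) - phi i)) n).
  - apply rsum_le. intros i Hi. unfold phi. rewrite S_INR.
    assert (Hi' : INR i + 1 <= INR n) by (rewrite <- S_INR; apply le_INR; lia).
    assert (He : 1 <= INR n - INR i) by lra.
    set (e := INR n - INR i) in *.
    replace (INR n - (INR i + 1) + s) with (e + s - 1) by (unfold e; ring).
    assert (0 < e + s - 1) by lra.
    replace (/ (e + s - 1) - / (e + s)) with (/ ((e + s - 1) * (e + s))) by (field; lra).
    assert (0 < (e + s - 1) * (e + s)) by nra.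
    assert ((e + s - 1) * (e + s) <= 2 * (s^2 + e^2)) by (pose proof (pow2_ge_0 (e - s)); nra).
    apply (Rmult_le_reg_r ((s^2 + e^2) * ((e + s - 1) * (e + s)))); [nra|].
    replace (s ^ 2 / (s ^ 2 + e ^ 2) * ((s ^ 2 + e ^ 2) * ((e + s - 1) * (e + s)))) with (s^2 * ((e + s - 1) * (e + s))) by (field; nra).
    replace (2 * s ^ 2 * / ((e + s - 1) * (e + s)) * ((s ^ 2 + e ^ 2) * ((e + s - 1) * (e + s)))) with (2 * s^2 * (s^2 + e^2)) by (field; nra).
    assert (0 <= s^2) by nra. nra.
  - rewrite rsum_scal, rsum_tele. unfold phi.
    replace (INR n - INR n + s) with s by ring. replace (INR n - INR 0 + s) with (INR n + s) by (simpl; ring).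
    pose proof (pos_INR n).
    assert (0 < / (INR n + s)) by (apply Rinv_0_lt_compat; lra).
    replace (2 * s ^ 2 * (/ s - / (INR n + s))) with (2 * s - 2 * s^2 * / (INR n + s)) by (field; lra).
    assert (0 <= 2 * s^2 * / (INR n + s)) by (apply Rmult_le_pos; [nra|lra]). lra.
Qed.

Lemma pow64_ge k : INR k + 1 <= 64 ^ k.
Proof.
  induction k; [simpl; lra|]. rewrite S_INR. simpl pow. pose proof (pos_INR k). lra.
Qed.

Lemma final_power N alpha : (1 <= N)%nat -> 1/2 < alpha -> INR N * sqrt (INR N) <= Rpower (INR N) (3 * alpha).
Proof.
  intros HN Ha. assert (1 <= INR N) by (replace 1 with (INR 1) by reflexivity; apply le_INR; lia).
  rewrite <- (Rpower_1 (INR N)) at 1 by lra. rewrite <- Rpower_sqrt by lra.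
  rewrite <- Rpower_plus. apply Rle_Rpower; lra.
Qed.

Lemma sqrt48 N : 0 <= N -> sqrt (48 * N) <= 7 * sqrt N.
Proof.
  intros HN. replace (7 * sqrt N) with (sqrt (49 * N)).
  - apply sqrt_le_1_alt. lra.
  - rewrite sqrt_mult_alt by lra. f_equal. replace 49 with (7 * 7) by ring. rewrite sqrt_square; lra.
Qed.

Theorem proposition4p2 (m : Z) (alpha : R) (Halpha : 1/2 < alpha < 2/3) :
  exists (K : R) (N0 : nat), forall N : nat, (2 <= N)%nat -> (N0 <= N)%nat ->
    Cmod (LHS N m) <= K * (Rpower (INR N) (3 * alpha) * FN N).
Proof.
  exists (248 * (10 + Rabs (IZR m))), 60%nat. intros N HN2 HN.
  pose proof (div_bounds N 2 ltac:(lia)). pose proof (div_bounds N 48 ltac:(lia)).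
  set (j0 := Z.of_nat (N / 2)). set (n1 := (N / 2 - 1)%nat). set (k := (N / 48)%nat) in *.
  assert (HNp : 0 < INR N) by (apply INR_N_pos; lia).
  assert (HFN : 0 < FN N) by (rewrite FN_eq by lia; pose proof (gn_lo_ge N HN); pose proof (Mmid_pos N ltac:(lia)); nra).
  assert (H64 : 0 < 64 ^ k) by (apply pow_lt; lra).
  set (C0 := (10 + Rabs (IZR m)) * INR N * (4 * FN N)).
  assert (HC0 : 0 <= C0) by (unfold C0; pose proof (Rabs_pos (IZR m)); apply Rmult_le_pos; [nra|lra]).
  set (S := 48 * INR N).
  set (B := fun i : nat => C0 * (S / (S + (INR n1 - INR i)^2)) + C0 * / 64 ^ k).
  assert (Hstep : Cmod (LHS N m) <= rsum B n1).
  { unfold LHS. unfold Csum_range at 1. unfold Zrange.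
    replace (Z.of_nat N / 2)%Z with j0 by (unfold j0; rewrite Nat2Z.inj_div; reflexivity).
    replace (Z.to_nat (j0 - 1 - 1 + 1)) with n1 by (unfold n1, j0; lia).
    rewrite map_map. eapply Rle_trans; [apply Cmod_sum_le|]. rewrite fold_seq_rsum.
    apply rsum_le. intros i Hi.
    assert (HBi : 0 <= B i).
    { unfold B. assert (0 <= S / (S + (INR n1 - INR i)^2)) by (unfold S; pose proof (pow2_ge_0 (INR n1 - INR i)); apply Rdiv_le_0_compat; lra).
      assert (0 <= / 64 ^ k) by (left; apply Rinv_0_lt_compat; lra). nra. }
    destruct (Z.even (Z.of_nat N - (1 + Z.of_nat i) + 1)).
    2:{ rewrite Cmod_0. exact HBi. }
    set (j := (1 + Z.of_nat i)%Z).
    assert (HE : IZR (j0 - j) = INR n1 - INR i).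
    { rewrite !INR_IZR_INZ, <- minus_IZR. f_equal. unfold j, j0, n1. lia. }
    eapply Rle_trans.
    - apply (inner_bound N m j (4 * FN N * (48 * INR N / (48 * INR N + (IZR (Z.of_nat (N / 2) - j))^2) + / 64 ^ (N / 48)))); unfold j, j0, n1 in *; try lia.
      intros l Hl. apply tt_final; lia.
    - right. fold j0. rewrite HE. unfold B, C0, S. fold k. ring. }
  eapply Rle_trans; [exact Hstep|].
  assert (HB : rsum B n1 = C0 * rsum (fun i => S / (S + (INR n1 - INR i)^2)) n1 + C0 * (INR n1 * / 64 ^ k)).
  { unfold B. rewrite rsum_lin, rsum_const. reflexivity. }
  rewrite HB.
  set (s := sqrt S).
  assert (Hs2 : s ^ 2 = S) by (unfold s; rewrite pow2_sqrt; unfold S; lra).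
  assert (Hs : 2 <= s).
  { unfold s. rewrite <- (sqrt_square 2) by lra. apply sqrt_le_1_alt. unfold S.
    assert (60 <= INR N) by (replace 60 with (INR 60) by (simpl; ring); apply le_INR; lia). lra. }
  assert (Ht : rsum (fun i => S / (S + (INR n1 - INR i)^2)) n1 <= 2 * s).
  { rewrite <- Hs2. apply tele_bound; lra. }
  assert (Hn : INR n1 * / 64 ^ k <= 48).
  { pose proof (pow64_ge k).
    assert (INR n1 <= 48 * (INR k + 1)).
    { replace 48 with (INR 48) by (simpl; ring). rewrite <- S_INR, <- mult_INR. apply le_INR. unfold n1; lia. }
    apply (Rmult_le_reg_r (64 ^ k)); [lra|]. rewrite Rmult_assoc, Rinv_l by lra. nra. }
  assert (Hsq : s <= 7 * sqrt (INR N)) by (apply sqrt48; lra).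
  assert (Hsq1 : 1 <= sqrt (INR N)).
  { rewrite <- sqrt_1. apply sqrt_le_1_alt. replace 1 with (INR 1) by reflexivity. apply le_INR; lia. }
  pose proof (final_power N alpha ltac:(lia) ltac:(lra)).
  apply Rle_trans with (C0 * (62 * sqrt (INR N))).
  { assert (C0 * rsum (fun i => S / (S + (INR n1 - INR i)^2)) n1 <= C0 * (2 * s)) by (apply Rmult_le_compat_l; lra).
    assert (C0 * (INR n1 * / 64 ^ k) <= C0 * 48) by (apply Rmult_le_compat_l; lra).
    assert (C0 * (2 * s + 48) <= C0 * (62 * sqrt (INR N))) by (apply Rmult_le_compat_l; lra).
    nra. }
  unfold C0.
  pose proof (Rabs_pos (IZR m)).
  replace ((10 + Rabs (IZR m)) * INR N * (4 * FN N) * (62 * sqrt (INR N))) with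
    (248 * (10 + Rabs (IZR m)) * ((INR N * sqrt (INR N)) * FN N)) by ring.
  apply Rmult_le_compat_l; [lra|]. apply Rmult_le_compat_r; lra.
Qed.
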